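(* Let $q(\bar x)\,{:}{-}\,A\wedge C$ be a conjunctive query with comparisons. If $q_1$ and $q_2$ are both cores of $q$, then $q_1$ and $q_2$ are isomorphic via a bijection that is the identity on the variables $\bar x$.
   Context: Fix a dense linearly ordered domain $\Delta$ of constants; terms are constants or variables. A conjunctive query with comparisons (CQC) $q(\bar x)\,{:}{-}\,A\wedge C$ consists of distinguished variables $\bar x$, a finite set $A$ of relational atoms over terms, and a finite set $C$ of comparisons $s\,\rho\,t$, $\rho\in\{=,<,\le\}$. $C\models s\,\rho\,t$ means every assignment to $\Delta$ satisfying $C$ satisfies $s\,\rho\,t$. For CQCs $q_1(\bar x)\,{:}{-}\,A_1\wedge C_1$, $q_2(\bar x)\,{:}{-}\,A_2\wedge C_2$, a homomorphism $q_1\to_{\bar x}q_2$ is a map $h$ from terms of $q_1$ to terms of $q_2$, identity on constants and on $\bar x$, with $h(A_1)\subseteq A_2$ and $C_2\models h(r)\,\rho\,h(s)$ for all $r\,\rho\,s\in C_1$. An isomorphism is a bijection $h$ between variables, identity on constants (and on $\bar x$), with $h(A_1)=A_2$ and $h(C_1)=C_2$. The extension $\mathrm{ext}(q)$ replaces $C$ by $\{r\,\rho\,s: r,s\text{ terms of }q,\ C\models r\,\rho\,s\}$. A core of $q$ is a CQC $q'$ such that (1) $q\to_{\bar x}q'$; (2) for every CQC $q''$ with $q\to_{\bar x}q''$ and $q''\to_{\bar x}q$ there is an injective homomorphism $q'\to_{\bar x}q''$; (3) $q'=\mathrm{ext}(q')$. *)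

(* Defs.v *)
From HB Require Import structures.
From mathcomp Require Import all_boot all_order.
Set Implicit Arguments. Unset Strict Implicit. Unset Printing Implicit Defensive.
Import Order.TTheory.

Section CQC.
Context {disp : Order.disp_t} (D : orderType disp).

Inductive term := TVar of nat | TConst of D.

Definition term_to (t : term) : nat + D :=
  match t with TVar v => inl v | TConst c => inr c end.
Definition term_of (s : nat + D) : term :=
  match s with inl v => TVar v | inr c => TConst c end.
Lemma term_toK : cancel term_to term_of. Proof. by case. Qed.
HB.instance Definition _ := Equality.copy term (can_type term_toK).

Inductive cop := CEq | CLt | CLe.
Definition cop_to (o : cop) : nat := match o with CEq => 0 | CLt => 1 | CLe => 2 end.
Definition cop_of (n : nat) : option cop :=
  match n with 0 => Some CEq | 1 => Some CLt | 2 => Some CLe | _ => None end.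
Lemma cop_toK : pcancel cop_to cop_of. Proof. by case. Qed.
HB.instance Definition _ := Equality.copy cop (pcan_type cop_toK).

(* relational atom: relation symbol (a nat) applied to a list of terms *)
Definition atom := (nat * seq term)%type.
(* comparison  s rho t  encoded as ((s, rho), t) *)
Definition cmp := (term * cop * term)%type.

(* body of a CQC: the set A of atoms and the set C of comparisons (finite sets
   represented as sequences, compared extensionally). The distinguished
   variables x̄ are passed separately. *)
Record cqc := CQC { atoms : seq atom; comps : seq cmp }.

Definition eval (s : nat -> D) (t : term) : D :=
  match t with TVar v => s v | TConst c => c end.

Definition sat (s : nat -> D) (c : cmp) : bool :=
  let: (r, o, t) := c in
  match o with
  | CEq => eval s r == eval s t
  | CLt => (eval s r < eval s t)%O
  | CLe => (eval s r <= eval s t)%O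
  end.

Definition entails (C : seq cmp) (c : cmp) : Prop :=
  forall s : nat -> D, (forall c', c' \in C -> sat s c') -> sat s c.

Definition terms (x : seq nat) (q : cqc) : seq term :=
  [seq TVar v | v <- x] ++ flatten [seq a.2 | a <- atoms q]
  ++ flatten [seq [:: c.1.1; c.2] | c <- comps q].

Definition term_var (t : term) : option nat :=
  match t with TVar v => Some v | TConst _ => None end.

Definition vars (x : seq nat) (q : cqc) : seq nat := pmap term_var (terms x q).

Definition map_atom (h : term -> term) (a : atom) : atom := (a.1, map h a.2).
Definition map_cmp (h : term -> term) (c : cmp) : cmp :=
  let: (r, o, t) := c in (h r, o, h t).

Definition is_hom (x : seq nat) (q1 q2 : cqc) (h : term -> term) : Prop :=
  [/\ forall t, t \in terms x q1 -> h t \in terms x q2,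
      forall c : D, h (TConst c) = TConst c,
      forall v, v \in x -> h (TVar v) = TVar v,
      forall a, a \in atoms q1 -> map_atom h a \in atoms q2 &
      forall c, c \in comps q1 -> entails (comps q2) (map_cmp h c)].

Definition hom (x : seq nat) (q1 q2 : cqc) : Prop := exists h, is_hom x q1 q2 h.

Definition inj_hom (x : seq nat) (q1 q2 : cqc) : Prop :=
  exists h, is_hom x q1 q2 h /\ {in terms x q1 &, injective h}.

Definition is_ext (x : seq nat) (q : cqc) : Prop :=
  forall r o t, ((r, o, t) \in comps q) <->
    [/\ r \in terms x q, t \in terms x q & entails (comps q) (r, o, t)].

Definition is_core (x : seq nat) (q q' : cqc) : Prop :=
  [/\ hom x q q',
      forall q'', hom x q q'' -> hom x q'' q -> inj_hom x q' q'' &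
      is_ext x q'].

Definition lift_var (f : nat -> nat) (t : term) : term :=
  match t with TVar v => TVar (f v) | TConst c => TConst c end.

Definition iso (x : seq nat) (q1 q2 : cqc) : Prop :=
  exists f : nat -> nat,
  [/\ forall v, v \in vars x q1 -> f v \in vars x q2,
      {in vars x q1 &, injective f},
      forall w, w \in vars x q2 -> exists2 v, v \in vars x q1 & f v = w &
      forall v, v \in x -> f v = v] /\
  [seq map_atom (lift_var f) a | a <- atoms q1] =i atoms q2 /\
  [seq map_cmp (lift_var f) c | c <- comps q1] =i comps q2.

End CQC.

(* Main.v *)
Require Import Defs.
From HB Require Import structures.
From mathcomp Require Import all_boot all_order.
Set Implicit Arguments. Unset Strict Implicit. Unset Printing Implicit Defensive.

Lemma inj_card (T U : eqType) (g : T -> U) (s : seq T) (t : seq U) :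
  {in s &, injective g} -> (forall a, a \in s -> g a \in t) ->
  size (undup s) <= size (undup t).
Proof.
move=> ginj gst.
rewrite -(size_map g).
apply: uniq_leq_size.
  rewrite map_inj_in_uniq ?undup_uniq //.
  by move=> a b; rewrite !mem_undup; apply: ginj.
by move=> y /mapP [a]; rewrite mem_undup => /gst ? ->; rewrite mem_undup.
Qed.

Lemma inj_surj (T U : eqType) (g : T -> U) (s : seq T) (t : seq U) :
  {in s &, injective g} -> (forall a, a \in s -> g a \in t) ->
  size (undup t) <= size (undup s) ->
  forall y, y \in t -> exists2 a, a \in s & g a = y.
Proof.
move=> ginj gst le y yt.
have U1 : uniq (map g (undup s)).
  rewrite map_inj_in_uniq ?undup_uniq //.
  by move=> a b; rewrite !mem_undup; apply: ginj.
have S1 : {subset map g (undup s) <= undup t}.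
  by move=> z /mapP [a]; rewrite mem_undup => /gst ? ->; rewrite mem_undup.
have [_ eqs] := uniq_min_size U1 S1 ltac:(by rewrite size_map).
have : y \in map g (undup s) by rewrite eqs mem_undup.
by move=> /mapP [a]; rewrite mem_undup => ? ->; exists a.
Qed.

Lemma map_inj_in_eq (T U : eqType) (f : T -> U) (P : seq T) s1 s2 :
  {in P &, injective f} -> {subset s1 <= P} -> {subset s2 <= P} ->
  map f s1 = map f s2 -> s1 = s2.
Proof.
move=> finj; elim: s1 s2 => [|a s1 IH] [|b s2] //= H1 H2 [eab es].
congr cons.
  by apply: finj => //; [apply: H1 | apply: H2]; rewrite inE eqxx.
by apply: IH => // z zs; [apply: H1|apply: H2]; rewrite inE zs orbT.
Qed.

Section S.
Context {disp : Order.disp_t} (D : orderType disp).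

Lemma atom_terms (x : seq nat) (q : cqc D) a t :
  a \in atoms q -> t \in a.2 -> t \in terms x q.
Proof.
move=> aq ta; rewrite /terms !mem_cat; apply/orP; right; apply/orP; left.
by apply/flatten_mapP; exists a.
Qed.

Lemma cmp_terms (x : seq nat) (q : cqc D) r o t :
  (r,o,t) \in comps q -> (r \in terms x q) && (t \in terms x q).
Proof.
move=> cq; rewrite /terms !mem_cat.
have H : forall u, u \in [:: r; t] ->
    u \in flatten [seq [:: c.1.1; c.2] | c <- comps q].
  by move=> u ut; apply/flatten_mapP; exists (r,o,t).
by rewrite !H ?inE ?eqxx ?orbT.
Qed.

Lemma mem_vars (x : seq nat) (q : cqc D) v :
  (v \in vars x q) = (TVar D v \in terms x q).
Proof.
rewrite /vars mem_pmap; apply/mapP/idP => [[t tq]|tq]; last by exists (TVar D v).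
by case: t tq => //= w tq [->].
Qed.

Lemma hom_id (x : seq nat) (q : cqc D) : is_hom x q q id.
Proof.
split => // [a aq|[[r o] t] cq].
  by case: a aq => n l; rewrite /map_atom /= map_id.
by move=> s Hs; exact: Hs.
Qed.

End S.

Theorem mainTheorem2 (disp : Order.disp_t) (D : orderType disp)
  (dense : forall a b : D, (a < b)%O -> exists c : D, (a < c)%O && (c < b)%O)
  (x : seq nat) (q q1 q2 : cqc D) :
  is_core x q q1 -> is_core x q q2 -> iso x q1 q2.
Proof.
move=> [hq1 c1 e1] [hq2 c2 e2].
have hqq : hom x q q by exists id; exact: hom_id.
have [h1 [Hh1 i1]] : inj_hom x q1 q2.
  apply: c1 => //. have [h [H _]] := c2 q hqq hqq. by exists h.
have [h2 [Hh2 i2]] : inj_hom x q2 q1.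
  apply: c2 => //. have [h [H _]] := c1 q hqq hqq. by exists h.
case: Hh1 => t1 k1 x1 a1 m1.
case: Hh2 => t2 k2 x2 a2 m2.
have le21 := inj_card i2 t2.
have sT := inj_surj i1 t1 le21.
have hv : forall v, TVar D v \in terms x q1 -> exists w, h1 (TVar D v) = TVar D w.
  move=> v vq. case E: (h1 (TVar D v)) => [w|c]; first by exists w.
  have cq2 : TConst c \in terms x q2 by rewrite -E t1.
  have cq1 := t2 _ cq2. rewrite k2 in cq1.
  have := i1 _ _ vq cq1. by rewrite E k1 => /(_ erefl).
pose f v := if h1 (TVar D v) is TVar w then w else v.
have lf : forall t, t \in terms x q1 -> lift_var f t = h1 t.
  case=> [v|c] tq /=; last by rewrite k1.
  by have [w E] := hv v tq; rewrite /f E.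
have ai1 : {in atoms q1 &, injective (map_atom h1)}.
  move=> [n1 l1] [n2 l2] A1 A2 [-> E]; congr pair.
  apply: (map_inj_in_eq i1) E => t tl.
    exact: (atom_terms _ A1).
  exact: (atom_terms _ A2).
have ai2 : {in atoms q2 &, injective (map_atom h2)}.
  move=> [n1 l1] [n2 l2] A1 A2 [-> E]; congr pair.
  apply: (map_inj_in_eq i2) E => t tl.
    exact: (atom_terms _ A1).
  exact: (atom_terms _ A2).
have aI21 := inj_card ai2 a2.
have sA := inj_surj ai1 a1 aI21.
have cmpin1 : forall c, c \in comps q1 -> map_cmp h1 c \in comps q2.
  move=> [[r o] t] cq /=. apply/(e2 (h1 r) o (h1 t)).
  have /andP[rq tq] := cmp_terms x cq.
  split; [exact: t1 | exact: t1 | exact: (m1 _ cq)].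
have cmpin2 : forall c, c \in comps q2 -> map_cmp h2 c \in comps q1.
  move=> [[r o] t] cq /=. apply/(e1 (h2 r) o (h2 t)).
  have /andP[rq tq] := cmp_terms x cq.
  split; [exact: t2 | exact: t2 | exact: (m2 _ cq)].
have ci1 : {in comps q1 &, injective (map_cmp h1)}.
  move=> [[r o] t] [[r' o'] t'] C C' /= [E1 -> E3].
  have /andP[rq tq] := cmp_terms x C.
  have /andP[rq' tq'] := cmp_terms x C'.
  by rewrite (i1 _ _ rq rq' E1) (i1 _ _ tq tq' E3).
have ci2 : {in comps q2 &, injective (map_cmp h2)}.
  move=> [[r o] t] [[r' o'] t'] C C' /= [E1 -> E3].
  have /andP[rq tq] := cmp_terms x C.
  have /andP[rq' tq'] := cmp_terms x C'.
  by rewrite (i2 _ _ rq rq' E1) (i2 _ _ tq tq' E3).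
have cI21 := inj_card ci2 cmpin2.
have sC := inj_surj ci1 cmpin1 cI21.
have eqA : forall b, b \in atoms q1 -> map_atom (lift_var f) b = map_atom h1 b.
  move=> [n l] bq; rewrite /map_atom /=; congr pair.
  apply/eq_in_map => t tl; apply: lf; exact: (atom_terms _ bq).
have eqC : forall c, c \in comps q1 -> map_cmp (lift_var f) c = map_cmp h1 c.
  move=> [[r o] t] cq /=; have /andP[rq tq] := cmp_terms x cq.
  by rewrite !lf.
exists f; split; [split| split].
- move=> v; rewrite !mem_vars => vq. have [w E] := hv v vq.
  by rewrite /f E -E t1.
- move=> v v'; rewrite !mem_vars => vq vq' /= Ef.
  have [w E] := hv v vq; have [w' E'] := hv v' vq'.
  move: Ef; rewrite /f E E' => Ew; subst w'.
  have : h1 (TVar D v) = h1 (TVar D v') by rewrite E E'.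
  by move/(i1 _ _ vq vq') => [].
- move=> w; rewrite mem_vars => /sT [[v|c] tq E]; last by rewrite k1 in E.
  by exists v; [rewrite mem_vars | rewrite /f E].
- by move=> v vx; rewrite /f x1.
- move=> a; apply/mapP/idP => [[b bq ->]|/sA [b bq <-]].
    by rewrite eqA // a1.
  by exists b => //; rewrite eqA.
- move=> c; apply/mapP/idP => [[b bq ->]|/sC [b bq <-]].
    by rewrite eqC // cmpin1.
  by exists b => //; rewrite eqC.
Qed.
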